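(* Let $s,t\geq0$ be integers. The isomorphism type generating series of the virtual species $\mathcal Q^{s,t}(X,X,X)$ is \[ \widetilde{\mathcal Q^{s,t}}(x)=\frac{(1-x^{s+2})(1-x^{t+2})}{1-x}-1, \] and the isomorphism type generating series of the virtual species $X^2-[t>0]X^2-[s>0]\mathcal E_2(X)$ is $x^2-[t>0]x^2-[s>0]x^2$. In particular both are symmetric in $s$ and $t$.
   Context: Species and virtual species and their operations are as in the theory of combinatorial species. For a species $F$ the cycle index series is $Z_F=\sum_{n\ge0}\frac1{n!}\sum_{\sigma\in\mathfrak S_n}\mathrm{fix}\,F[\sigma]\,p_1^{\sigma_1}p_2^{\sigma_2}\cdots$ (with $\sigma_k$ the number of $k$-cycles of $\sigma$), extended additively to virtual species; the isomorphism type generating series $\widetilde F(x)$ is obtained by substituting $p_k=x^k$ (for an actual species it counts isomorphism types by size). $X,Y,Z$ are singleton species of three sorts; $1=\mathcal E_0$; $\mathcal E$ is the species of sets, $\mathcal E_n$, $\mathcal E_{m\leq\bullet<n}$, $\mathcal E_{<n}$ its restrictions to sets of size $n$, sizes $m,\dots,n-1$, sizes $<n$; $\mathcal E(-X)$ is the multiplicative inverse of $\mathcal E(X)$; $[P]$ is the Iverson bracket. $\mathcal Q^{s,t}(X,Y,Z)=\big(1+X+\mathcal E_{2\leq\bullet<2+s}(Z)\big)\,\mathcal E\big(X(\mathcal E_{<1+t}(Y)\mathcal E(-X)-1)\big)-1$. *)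

(* Defs.v *)
From HB Require Import structures.
From mathcomp Require Import all_boot all_order all_algebra all_fingroup.
From mathcomp Require Import mpoly.
Set Implicit Arguments. Unset Strict Implicit. Unset Printing Implicit Defensive.
Import GRing.Theory.
Local Open Scope ring_scope.

(* Cycle index series (over rat) in the power-sum variables p_1, p_2, ...  *)
(* A cycle index series Z is represented by the family of its truncations:  *)
(* (Z N) : {mpoly rat[N]} is the part of Z of weighted degree <= N, where    *)
(* the variable 'X_i (i : 'I_N) stands for p_(i+1) and p_k has weight k.     *)
(* (Monomials of weight <= N only involve p_1..p_N, so nothing is lost.)     *)
(* Virtual species enter the statement only through their cycle index        *)
(* series, and the operations below are the cycle-index images of the       *)
(* species operations (sum, difference, product, substitution).            *)

Definition cis := forall N : nat, {mpoly rat[N]}.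

(* the variable p_k at truncation level N (0 if k = 0 or k > N) *)
Definition pv (N k : nat) : {mpoly rat[N]} := \sum_(i < N | i.+1 == k) 'X_i.

Definition wdeg N (m : 'X_{1..N}) : nat := (\sum_(i < N) i.+1 * m i)%N.

Definition trunc N (p : {mpoly rat[N]}) : {mpoly rat[N]} :=
  \sum_(m <- msupp p | (wdeg m <= N)%N) p@_m *: 'X_[m].

(* Cycle index of a (virtual) species given by its fixed-point counts:
   Z_F = sum_n 1/n! sum_(sigma in S_n) fix F[sigma] p_1^sigma_1 p_2^sigma_2 ...
   ( prod over the cycles c of sigma of p_|c| ). *)
Definition cidx (fx : forall n : nat, {perm 'I_n} -> int) : cis := fun N =>
  \sum_(n < N.+1) (n`!%:R : rat)^-1 *:
     \sum_(sigma : {perm 'I_n})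
        (fx n sigma)%:~R *: \prod_(c in porbits sigma) pv N #|c|.

Definition cadd (F G : cis) : cis := fun N => F N + G N.
Definition copp (F : cis) : cis := fun N => - F N.
Definition csub (F G : cis) : cis := cadd F (copp G).
Definition cscale (a : rat) (F : cis) : cis := fun N => a *: F N.
Definition cmul (F G : cis) : cis := fun N => trunc (F N * G N).

Definition cstretch N (j : nat) (q : {mpoly rat[N]}) : {mpoly rat[N]} :=
  comp_mpoly [tuple pv N (j * l.+1) | l < N] q.

(* plethystic substitution F o G (for G without constant term):
   p_j |-> G(p_j, p_2j, p_3j, ...) *)
Definition ccomp (F G : cis) : cis := fun N =>
  trunc (comp_mpoly [tuple trunc (cstretch j.+1 (G N)) | j < N] (F N)).

(* multiplicative inverse of a series with constant term 1:
   1/Z = sum_j (1 - Z)^j *)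
Definition cinv (F : cis) : cis := fun N =>
  trunc (\sum_(j < N.+1) (1 - F N) ^+ j).

Definition s_one : cis := cidx (fun n _ => (n == 0%N)%:Z).
Definition s_X : cis := cidx (fun n _ => (n == 1%N)%:Z).
Definition s_E : cis := cidx (fun n _ => 1).
Definition s_En (k : nat) : cis := cidx (fun n _ => (n == k)%:Z).
Definition s_Erange (m k : nat) : cis :=
  cidx (fun n _ => ((m <= n) && (n < k))%N%:Z).
Definition s_Elt (k : nat) : cis := s_Erange 0 k.
Definition s_Eneg : cis := cinv s_E.                                    (* E(-X) *)

Definition Qst (s t : nat) : cis :=
  csub (cmul (cadd (cadd s_one s_X) (s_Erange 2 (2 + s)))
             (ccomp s_E (cmul s_X (csub (cmul (s_Elt (1 + t)) s_Eneg) s_one))))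
       s_one.

Definition Vst (s t : nat) : cis :=
  csub (csub (cmul s_X s_X) (cscale (0 < t)%N%:R (cmul s_X s_X)))
       (cscale (0 < s)%N%:R (s_En 2)).

(* isomorphism type generating series: substitute p_k = x^k;
   coefficient of x^n (read off from the truncation at level n) *)
Definition isotype (F : cis) (n : nat) : rat :=
  (mmap (fun c : rat => c%:P) (fun i : 'I_n => ('X^(i.+1) : {poly rat})) (F n))`_n.

(* Main.v *)
Require Import Defs.
From HB Require Import structures.
From mathcomp Require Import all_boot all_order all_algebra all_fingroup.
From mathcomp Require Import mpoly.
Set Implicit Arguments. Unset Strict Implicit. Unset Printing Implicit Defensive.
Import GRing.Theory Num.Theory.
Local Open Scope ring_scope.
Definition eqm (N : nat) (p q : {poly rat}) := forall k, (k <= N)%N -> p`_k = q`_k.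

Lemma eqm_refl N p : eqm N p p. Proof. by []. Qed.
Lemma eqm_sym N p q : eqm N p q -> eqm N q p. Proof. by move=> H k Hk; rewrite H. Qed.
Lemma eqm_trans N p q r : eqm N p q -> eqm N q r -> eqm N p r.
Proof. by move=> H1 H2 k Hk; rewrite H1 ?H2. Qed.
Lemma eqm_eq N p q : p = q -> eqm N p q. Proof. by move=> ->. Qed.
Lemma eqmD N p q p' q' : eqm N p p' -> eqm N q q' -> eqm N (p + q) (p' + q').
Proof. by move=> H1 H2 k Hk; rewrite !coefD H1 ?H2. Qed.
Lemma eqmN N p p' : eqm N p p' -> eqm N (- p) (- p').
Proof. by move=> H1 k Hk; rewrite !coefN H1. Qed.
Lemma eqmB N p q p' q' : eqm N p p' -> eqm N q q' -> eqm N (p - q) (p' - q').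
Proof. by move=> H1 H2; apply: eqmD => //; apply: eqmN. Qed.
Lemma eqmM N p q p' q' : eqm N p p' -> eqm N q q' -> eqm N (p * q) (p' * q').
Proof.
move=> H1 H2 k Hk; rewrite !coefM; apply: eq_bigr => j _.
have Hj : (j <= N)%N by apply: leq_trans Hk; rewrite -ltnS.
by rewrite H1 // H2 // (leq_trans (leq_subr _ _) Hk).
Qed.
Lemma eqmZ N a p p' : eqm N p p' -> eqm N (a *: p) (a *: p').
Proof. by move=> H k Hk; rewrite !coefZ H. Qed.
Lemma eqm_sum N (I : Type) (r : seq I) (P : pred I) (F G : I -> {poly rat}) :
  (forall i, P i -> eqm N (F i) (G i)) ->
  eqm N (\sum_(i <- r | P i) F i) (\sum_(i <- r | P i) G i).
Proof.
move=> H; apply: (big_ind2 (eqm N)) => // *; exact: eqmD.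
Qed.
Lemma eqm_prod N (I : Type) (r : seq I) (P : pred I) (F G : I -> {poly rat}) :
  (forall i, P i -> eqm N (F i) (G i)) ->
  eqm N (\prod_(i <- r | P i) F i) (\prod_(i <- r | P i) G i).
Proof.
move=> H; apply: (big_ind2 (eqm N)) => // *; exact: eqmM.
Qed.
Lemma eqmX N p p' e : eqm N p p' -> eqm N (p ^+ e) (p' ^+ e).
Proof.
move=> H; elim: e => [|e IH]; first by rewrite !expr0.
by rewrite !exprS; apply: eqmM.
Qed.
Lemma eqm_Xn0 N m p : (N < m)%N -> eqm N ('X^m * p) 0.
Proof.
move=> Hm k Hk; rewrite coefXnM coef0 ifT //; exact: leq_ltn_trans Hk Hm.
Qed.

Definition M N (h : 'I_N -> {poly rat}) (p : {mpoly rat[N]}) : {poly rat} :=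
  mmap (@polyC rat) h p.
Definition ev N (p : {mpoly rat[N]}) := M (fun i : 'I_N => 'X^(i.+1)) p.

Lemma isotypeE F n : isotype F n = (ev (F n))`_n.
Proof. by []. Qed.

Lemma M_add N h : {morph @M N h : x y / x + y}.
Proof. by move=> x y; rewrite /M mmapD. Qed.
Lemma M_opp N h : {morph @M N h : x / - x}.
Proof. by move=> x; rewrite /M mmapN. Qed.
Lemma M_sub N h : {morph @M N h : x y / x - y}.
Proof. by move=> x y; rewrite /M mmapB. Qed.
Lemma M_mul N h : {morph @M N h : x y / x * y}.
Proof. by move=> x y; rewrite /M rmorphM. Qed.
Lemma M_one N h : @M N h 1 = 1.
Proof. by rewrite /M rmorph1. Qed.
Lemma M_scale N h c p : @M N h (c *: p) = c *: M h p.
Proof. by rewrite /M mmapZ mul_polyC. Qed.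
Lemma M_sum N h (I : Type) (r : seq I) (P : pred I) (F : I -> {mpoly rat[N]}) :
  M h (\sum_(i <- r | P i) F i) = \sum_(i <- r | P i) M h (F i).
Proof. by rewrite /M raddf_sum. Qed.
Lemma M_prod N h (I : Type) (r : seq I) (P : pred I) (F : I -> {mpoly rat[N]}) :
  M h (\prod_(i <- r | P i) F i) = \prod_(i <- r | P i) M h (F i).
Proof. by rewrite /M rmorph_prod. Qed.
Lemma M_X N h (i : 'I_N) : M h 'X_i = h i.
Proof. by rewrite /M mmapX mmap1U. Qed.
Lemma M_Xm N h (m : 'X_{1..N}) : M h 'X_[m] = \prod_(i < N) h i ^+ m i.
Proof. by rewrite /M mmapX. Qed.

Lemma porbits_sum (T : finType) (s : {perm T}) : (\sum_(c in porbits s) #|c|)%N = #|T|.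
Proof.
have H := @orbit_partition _ _ _ 'P <[s]>%g [set: T].
rewrite -cardsT (card_partition (H _)).
  apply: eq_bigl => c. rewrite /porbits porbitE.
  by apply/imsetP/imsetP => -[x _ ->]; exists x.
apply/actsP => g _ x; by rewrite !inE.
Qed.

Lemma porbits_card n (s : {perm 'I_n}) c : c \in porbits s -> (0 < #|c| <= n)%N.
Proof.
move=> /imsetP [x _ ->]; rewrite lt0n card_porbit_neq0 /=.
by rewrite -[X in (_ <= X)%N](card_ord n) max_card.
Qed.

Lemma prod_porbits n (s : {perm 'I_n}) (b y : {poly rat}) :
  \prod_(c in porbits s) (b * y ^+ #|c|) = b ^+ #|porbits s| * y ^+ n.
Proof. by rewrite big_split /= prodr_const prodrXr porbits_sum card_ord. Qed.

Lemma M_pv N h (hk : nat -> {poly rat}) :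
  (forall i : 'I_N, h i = hk i.+1) -> forall k, (0 < k <= N)%N -> M h (pv N k) = hk k.
Proof.
move=> Hh k /andP [k0 kN].
have kN' : (k.-1 < N)%N by rewrite prednK.
rewrite /pv M_sum (big_pred1 (Ordinal kN')).
  by rewrite M_X Hh /= prednK.
move=> i /=; rewrite -(inj_eq val_inj) /=; by case: (k) k0.
Qed.

Definition wdeg' N (m : 'X_{1..N}) := (\sum_(i < N) i.+1 * m i)%N.

Lemma ev_Xm N (m : 'X_{1..N}) : ev 'X_[m] = 'X^(wdeg m).
Proof.
rewrite /ev M_Xm /wdeg -prodrXr; apply: eq_bigr => i _.
by rewrite exprM.
Qed.

Lemma ev_trunc N (p : {mpoly rat[N]}) : eqm N (ev (trunc p)) (ev p).
Proof.
rewrite [X in eqm _ _ (ev X)](mpolyE p) /trunc /ev !M_sum.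
rewrite [X in eqm _ _ X](bigID (fun m => wdeg m <= N)%N) /=.
rewrite -[X in eqm _ X _]addr0; apply: eqmD => //.
apply: eqm_sym; apply: (@eqm_trans _ _ (\sum_(m <- msupp p | ~~ (wdeg m <= N)%N) 0)).
  apply: eqm_sum => m Hm; rewrite M_scale -/(ev _) ev_Xm => k Hk.
  rewrite coefZ coefXn coef0.
  case: eqP => [E|]; last by rewrite mulr0.
  by move: Hm; rewrite -E Hk.
by rewrite big1.
Qed.

Lemma M_cidx N h fx : M h (cidx fx N) =
  \sum_(n < N.+1) (n`!%:R : rat)^-1 *:
     \sum_(sigma : {perm 'I_n}) (fx n sigma)%:~R *: \prod_(c in porbits sigma) M h (pv N #|c|).
Proof.
rewrite /cidx M_sum; apply: eq_bigr => n _; rewrite M_scale M_sum; congr (_ *: _).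
by apply: eq_bigr => s _; rewrite M_scale M_prod.
Qed.

Lemma ev_pv N k : (0 < k <= N)%N -> ev (pv N k) = 'X^k.
Proof. by move=> Hk; rewrite /ev (@M_pv _ _ (fun k => 'X^k)). Qed.

Lemma ev_cidx N (b : nat -> int) :
  ev (cidx (fun n _ => b n) N) = \poly_(n < N.+1) ((b n)%:~R : rat).
Proof.
rewrite /ev M_cidx poly_def; apply: congr_big => // n _.
have Hn : (n <= N)%N by rewrite -ltnS.
transitivity ((n`!%:R : rat)^-1 *: \sum_(sigma : {perm 'I_n}) (b n)%:~R *: ('X^n : {poly rat})).
  congr (_ *: _); apply: congr_big => // s _; congr (_ *: _).
  have := prod_porbits s 1 'X; rewrite expr1n mul1r => <-.
  apply: eq_bigr => c Hc; rewrite mul1r -/(ev _) ev_pv //.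
  by case/andP: (porbits_card Hc) => -> /= H; apply: leq_trans H Hn.
rewrite sumr_const card_Sn -scaler_nat scalerA scalerA mulrA mulVf ?mul1r //.
by rewrite pnatr_eq0 -lt0n fact_gt0.
Qed.

Lemma M_eqm N (h1 h2 : 'I_N -> {poly rat}) p :
  (forall i, eqm N (h1 i) (h2 i)) -> eqm N (M h1 p) (M h2 p).
Proof.
move=> H; rewrite (mpolyE p) !M_sum; apply: eqm_sum => m _.
rewrite !M_scale !M_Xm; apply: eqmZ; apply: eqm_prod => i _; exact: eqmX.
Qed.

Lemma M_comp N K (h : 'I_K -> {poly rat}) (lq : N.-tuple {mpoly rat[K]}) p :
  M h (comp_mpoly lq p) = M (fun i => M h (tnth lq i)) p.
Proof.
rewrite comp_mpolyEX [in RHS](mpolyE p) !M_sum; apply: eq_bigr => m _.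
by rewrite !M_scale comp_mpolyX M_prod M_Xm; congr (_ *: _); apply: eq_bigr => i _; rewrite /M rmorphXn.
Qed.

Lemma pv_big N k : (N < k)%N -> pv N k = 0.
Proof.
move=> Hk; rewrite /pv big_pred0 // => i; apply/negbTE/eqP => E.
by move: (ltn_ord i); rewrite -ltnS E ltnNge Hk.
Qed.

Lemma ev_stretch N j (q : {mpoly rat[N]}) : (0 < j)%N ->
  eqm N (ev (cstretch j q)) ((ev q) \Po 'X^j).
Proof.
move=> j0; rewrite /cstretch /ev M_comp.
apply: (@eqm_trans _ _ (M (fun i : 'I_N => 'X^(j * i.+1)) q)).
  apply: M_eqm => i; rewrite tnth_mktuple.
  case: (leqP (j * i.+1) N) => H.
    by rewrite -/(ev _) ev_pv // muln_gt0 j0.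
  rewrite pv_big // /M mmap0 -(mulr1 'X^_); apply: eqm_sym; exact: eqm_Xn0.
apply: eqm_eq; rewrite (mpolyE q) !M_sum raddf_sum /=; apply: eq_bigr => m _.
rewrite !M_scale linearZ /= !M_Xm rmorph_prod /=; congr (_ *: _).
by apply: eq_bigr => i _; rewrite !rmorphXn /= comp_polyX exprM.
Qed.

Definition iso (F : cis) (P : {poly rat}) := forall N, eqm N (ev (F N)) P.

Lemma iso_add F G P Q : iso F P -> iso G Q -> iso (cadd F G) (P + Q).
Proof. by move=> HF HG N; rewrite /cadd /ev M_add; apply: eqmD. Qed.
Lemma iso_sub F G P Q : iso F P -> iso G Q -> iso (csub F G) (P - Q).
Proof. by move=> HF HG N; rewrite /csub /cadd /copp /ev M_add M_opp; apply: eqmB. Qed.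
Lemma iso_scale a F P : iso F P -> iso (cscale a F) (a *: P).
Proof. by move=> HF N; rewrite /cscale /ev M_scale; apply: eqmZ. Qed.
Lemma iso_mul F G P Q : iso F P -> iso G Q -> iso (cmul F G) (P * Q).
Proof.
move=> HF HG N; rewrite /cmul; apply: eqm_trans (ev_trunc _) _.
by rewrite /ev M_mul; apply: eqmM.
Qed.

Lemma iso_cidx (b : nat -> int) (P : {poly rat}) :
  (forall n, ((b n)%:~R : rat) = P`_n) -> iso (cidx (fun n _ => b n)) P.
Proof.
by move=> H N k Hk; rewrite ev_cidx coef_poly ltnS Hk H.
Qed.

Lemma iso_one : iso s_one 1.
Proof. by apply: iso_cidx => n; rewrite coef1; case: (n == 0%N). Qed.
Lemma iso_X : iso s_X 'X.
Proof. by apply: iso_cidx => n; rewrite coefX; case: (n == 1%N). Qed.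
Lemma iso_En k : iso (s_En k) 'X^k.
Proof. by apply: iso_cidx => n; rewrite coefXn; case: (n == k). Qed.
Lemma iso_Erange m k : iso (s_Erange m k) (\poly_(n < k) ((m <= n)%N%:R)).
Proof.
apply: iso_cidx => n; rewrite coef_poly.
by case: (m <= n)%N; case: (n < k)%N.
Qed.

Lemma ev_E N : ev (s_E N) = \sum_(i < N.+1) 'X^i.
Proof.
rewrite (ev_cidx N (fun _ => 1)) poly_def; apply: eq_bigr => i _.
by rewrite scale1r.
Qed.

Lemma subX1_sum N : (1 - 'X) * \sum_(i < N) 'X^i = 1 - 'X^N :> {poly rat}.
Proof. by rewrite -opprB mulNr -subrX1 opprB. Qed.

Lemma iso_Eneg : iso s_Eneg (1 - 'X).
Proof.
move=> N; rewrite /s_Eneg /cinv; apply: eqm_trans (ev_trunc _) _.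
rewrite /ev M_sum.
set e := \sum_(i < N.+1) ('X^i : {poly rat}).
have He : M (fun i : 'I_N => 'X^(i.+1)) (s_E N) = e by exact: ev_E.
under eq_bigr => j _ do rewrite /M rmorphXn rmorphB /= rmorph1 -/(M _ _) He.
set u := 1 - e.
set S := \sum_(j < N.+1) u ^+ j.
set w := \sum_(i < N) ('X^i : {poly rat}).
have Hu : u = - ('X * w).
  rewrite /u /e big_ord_recl expr0 opprD addrA subrr add0r; congr (- _).
  by rewrite /w mulr_sumr; apply: eq_bigr => i _; rewrite exprS.
have HeS : e * S = 1 - u ^+ N.+1.
  have -> : e = - (u - 1) by rewrite /u addrAC subrr add0r opprK.
  by rewrite /S mulNr -subrX1 opprB.
have Hu0 : eqm N (u ^+ N.+1) 0.
  rewrite Hu exprNn exprMn mulrCA; exact: eqm_Xn0.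
have H1 : eqm N ((1 - 'X) * e) 1.
  rewrite subX1_sum -[X in eqm _ _ X]subr0; apply: eqmB => //.
  rewrite -(mulr1 'X^_); exact: eqm_Xn0.
have H2 : eqm N (e * S) 1.
  by rewrite HeS -[X in eqm _ _ X]subr0; apply: eqmB.
apply: (@eqm_trans _ _ (((1 - 'X) * e) * S)).
  by rewrite -[X in eqm _ X _]mul1r; apply: eqmM => //; apply: eqm_sym.
rewrite -mulrA -[X in eqm _ _ X]mulr1; exact: eqmM.
Qed.

Definition sgn n := \sum_(s : {perm 'I_n}) ((-1) ^+ #|porbits s| : rat).

Lemma sgn0 : sgn 0 = 1.
Proof.
rewrite /sgn (eq_bigr (fun _ => 1)) ?sumr_const ?card_Sn //.
move=> s _; suff -> : #|porbits s| = 0%N by [].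
by apply/eqP; rewrite -leqn0 -[X in (_ <= X)%N](card_ord 0) leq_imset_card.
Qed.

Lemma sgn1 : sgn 1 = -1.
Proof.
rewrite /sgn (eq_bigr (fun _ => -1)) ?sumr_const ?card_Sn //.
move=> s _; suff -> : #|porbits s| = 1%N by [].
apply/eqP; rewrite eqn_leq -[X in (_ <= X)%N](card_ord 1) leq_imset_card /=.
by apply/card_gt0P; exists (porbit s ord0); apply: imset_f.
Qed.

Lemma sgnSS n : sgn n.+2 = 0.
Proof.
pose t := tperm (ord0 : 'I_n.+2) ord_max.
have HS : sgn n.+2 = - sgn n.+2.
  rewrite {1}/sgn (reindex_inj (mulgI t)) /= /sgn -sumrN; apply: eq_bigr => s _.
  have := odd_mul_tperm ord0 ord_max s; rewrite /odd_perm.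
  have -> : (ord0 != ord_max :> 'I_n.+2) by [].
  rewrite /t => E.
  have Ho : odd #|porbits (tperm (ord0 : 'I_n.+2) ord_max * s)%g| = ~~ odd #|porbits s|.
    by move: E; case: (odd #|'I_n.+2|); case: (odd #|porbits (tperm (ord0 : 'I_n.+2) ord_max * s)%g|); case: (odd #|porbits s|).
  by rewrite -signr_odd Ho signrN signr_odd.
have : sgn n.+2 *+ 2 = 0 by rewrite mulr2n {1}HS addNr.
by move/eqP; rewrite mulrn_eq0 /= => /eqP.
Qed.

Lemma eqm_comp N p q k : (0 < k)%N -> eqm N p q -> eqm N (p \Po 'X^k) (q \Po 'X^k).
Proof.
move=> k0 H i Hi; rewrite !coef_comp_poly_Xn //; case: (k %| i)%N => //.
by apply: H; apply: leq_trans (leq_div _ _) Hi.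
Qed.

Lemma sign_scale k (Y : {poly rat}) : (-1) ^+ k * Y = ((-1 : rat) ^+ k) *: Y.
Proof. by rewrite -mul_polyC rmorphXn rmorphN1. Qed.

Lemma iso_comp G d : (0 < d)%N -> iso G (- 'X^d) -> iso (ccomp s_E G) (1 - 'X^d).
Proof.
move=> d0 HG N; rewrite /ccomp; apply: eqm_trans (ev_trunc _) _.
rewrite /ev M_comp M_cidx.
set hk := fun k => ev (trunc (cstretch k (G N))).
have Hh : forall i : 'I_N, M (fun i0 : 'I_N => 'X^(i0.+1))
            (tnth [tuple trunc (cstretch j.+1 (G N)) | j < N] i) = hk i.+1.
  by move=> i; rewrite tnth_mktuple.
apply: (@eqm_trans _ _ (\sum_(n < N.+1) (n`!%:R : rat)^-1 *:
     \sum_(sigma : {perm 'I_n}) (1 : int)%:~R *: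
        \prod_(c in porbits sigma) (-1 * ('X^d) ^+ #|c|))).
  apply: eqm_sum => n _; apply: eqmZ; apply: eqm_sum => s _; apply: eqmZ.
  apply: eqm_prod => c Hc.
  have /andP [c0 cn] := porbits_card Hc.
  have cN : (#|c| <= N)%N by apply: leq_trans cn _; rewrite -ltnS.
  rewrite (M_pv Hh) ?c0 //.
  apply: eqm_trans (ev_trunc _) _.
  apply: eqm_trans (ev_stretch _ c0) _.
  apply: eqm_trans (eqm_comp c0 (HG N)) _.
  apply: eqm_eq; rewrite rmorphN /= rmorphXn /= comp_polyX -!exprM mulnC mulN1r.
  by [].
under eq_bigr => n _ do under eq_bigr => s _ do
  rewrite prod_porbits scale1r sign_scale.
under eq_bigr => n _ do rewrite -scaler_suml -/(sgn n).
clear Hh hk; case: N => [|N].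
  rewrite big_ord1 sgn0 /= scale1r expr0 => k Hk.
  rewrite leqn0 in Hk; rewrite (eqP Hk) coefB coef1 coefXn coefZ coef1 /=.
  by case: d d0 HG.
apply: eqm_eq.
rewrite big_ord_recl big_ord_recl big1 => [|i _]; last first.
  by rewrite /= sgnSS scale0r scaler0.
by rewrite /= sgn0 sgn1 !invr1 !scale1r expr0 expr1 addr0 scaleN1r.
Qed.

Lemma iso_eq F P Q : iso F P -> P = Q -> iso F Q.
Proof. by move=> H <-. Qed.

Lemma poly1_sum K : \poly_(n < K) (1 : rat) = \sum_(i < K) 'X^i.
Proof. by rewrite poly_def; apply: eq_bigr => i _; rewrite scale1r. Qed.

Lemma iso_G t : iso (cmul s_X (csub (cmul (s_Elt (1 + t)) s_Eneg) s_one)) (- 'X^(t + 2)).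
Proof.
apply: iso_eq.
  apply: iso_mul; first exact: iso_X.
  apply: iso_sub; last exact: iso_one.
  apply: iso_mul; [exact: iso_Erange | exact: iso_Eneg].
rewrite (eq_poly (fun _ => 1)); last by [].
rewrite poly1_sum [_ * (1 - 'X)]mulrC subX1_sum addrAC subrr add0r mulrN -exprS.
by rewrite add1n addn2.
Qed.

Lemma iso_A s : iso (cadd (cadd s_one s_X) (s_Erange 2 (2 + s))) (\poly_(n < s + 2) 1).
Proof.
apply: iso_eq.
  apply: iso_add; last exact: iso_Erange.
  apply: iso_add; [exact: iso_one | exact: iso_X].
apply/polyP => k; rewrite !coefD coef1 coefX !coef_poly addnC.
by case: k => [|[|k]] /=; rewrite ?addn2 /= ?addr0 ?add0r.
Qed.

Lemma iso_Q s t : iso (Qst s t) ((\poly_(n < s + 2) 1) * (1 - 'X^(t + 2)) - 1).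
Proof.
apply: iso_sub; last exact: iso_one.
apply: iso_mul; first exact: iso_A.
apply: iso_comp; first by rewrite addn2.
exact: iso_G.
Qed.

Lemma iso_V s t : iso (Vst s t)
  ('X^2 - (0 < t)%N%:R *: 'X^2 - (0 < s)%N%:R *: 'X^2).
Proof.
apply: iso_eq.
  apply: iso_sub; last by apply: iso_scale; exact: iso_En.
  apply: iso_sub; first by apply: iso_mul; exact: iso_X.
  by apply: iso_scale; apply: iso_mul; exact: iso_X.
by rewrite -expr2.
Qed.

Lemma oneX_neq0 : (1 - 'X : {poly rat}) != 0.
Proof.
apply/eqP => H; have := congr1 (fun p : {poly rat} => p`_0) H.
by rewrite coefB coef1 coefX coef0 /= subr0 => /eqP; rewrite oner_eq0.
Qed.

Lemma Qpoly s t : (1 - 'X^(s + 2)) * (1 - 'X^(t + 2)) %/ (1 - 'X) =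
  (\poly_(n < s + 2) 1) * (1 - 'X^(t + 2)) :> {poly rat}.
Proof.
rewrite poly1_sum -[1 - 'X^(s + 2)]subX1_sum [(1 - 'X) * _]mulrC -mulrA [(1 - 'X) * _]mulrC.
by rewrite mulrA mulpK // oneX_neq0.
Qed.
Lemma Qpoly' s t : ((1 - 'X^(s + 2)) * (1 - 'X^(t + 2)) %/ (1 - 'X) - 1 : {poly rat}) =
  (\poly_(n < s + 2) 1) * (1 - 'X^(t + 2)) - 1.
Proof. by rewrite Qpoly. Qed.
Lemma iso_Q' s t : iso (Qst s t) ((1 - 'X^(s + 2)) * (1 - 'X^(t + 2)) %/ (1 - 'X) - 1 : {poly rat}).
Proof. exact: (iso_eq (iso_Q s t) (esym (Qpoly' s t))). Qed.

Theorem lemma4p5 (s t : nat) :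
  (forall n : nat, isotype (Qst s t) n =
         (((1 - 'X^(s + 2)) * (1 - 'X^(t + 2)) %/ (1 - 'X) - 1 : {poly rat})`_n)) /\
      (forall n : nat, isotype (Vst s t) n =
         (('X^2 - (0 < t)%N%:R *: 'X^2 - (0 < s)%N%:R *: 'X^2 : {poly rat})`_n)) /\
      (forall n : nat, isotype (Qst s t) n = isotype (Qst t s) n) /\
      (forall n : nat, isotype (Vst s t) n = isotype (Vst t s) n).
Proof.
have HQ : forall s t n, isotype (Qst s t) n =
         (((1 - 'X^(s + 2)) * (1 - 'X^(t + 2)) %/ (1 - 'X) - 1 : {poly rat})`_n).
  move=> s' t' n; rewrite isotypeE; exact: (iso_Q' s' t' (leqnn n)).
have HV : forall s t n, isotype (Vst s t) n =
         (('X^2 - (0 < t)%N%:R *: 'X^2 - (0 < s)%N%:R *: 'X^2 : {poly rat})`_n).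
  move=> s' t' n; rewrite isotypeE; exact: (iso_V s' t' (leqnn n)).
split; first exact: HQ.
split; first exact: HV.
split => n.
  apply: (eq_trans (HQ s t n)); apply: esym; apply: (eq_trans (HQ t s n)).
  by rewrite mulrC.
apply: (eq_trans (HV s t n)); apply: esym; apply: (eq_trans (HV t s n)).
by rewrite addrAC.
Qed.
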